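(* For every $n>6$, the sensitivity to synchronism of elementary cellular automaton rule $128$ satisfies $\mu(f_{128,n})=\dfrac{3^n-2^{n+1}-10n+2}{3^n-2^{n+1}+2}$.
   Context: Cells are indexed by $\mathbb{Z}_n=\{0,\dots,n-1\}$, indices modulo $n$. Rule $128$ has local rule $r_{128}(x_1,x_2,x_3)=x_1\wedge x_2\wedge x_3$ and global function $f_{128,n}(x)_i=r_{128}(x_{i-1},x_i,x_{i+1})$. An update schedule is an ordered partition $\Delta=(\Delta_1,\dots,\Delta_k)$ of $\mathbb{Z}_n$ into nonempty blocks; $\mathcal{P}_n$ is the set of them. For a block $B$ let $f^{(B)}(x)_i=f_{128,n}(x)_i$ if $i\in B$ and $x_i$ otherwise; $f^{(\Delta)}_{128,n}=f^{(\Delta_k)}\circ\cdots\circ f^{(\Delta_1)}$. The dynamics of $\Delta$ is the transition digraph with arcs $(x,f^{(\Delta)}_{128,n}(x))$; $\mathcal{D}(f_{128,n})$ is the set of distinct dynamics over $\Delta\in\mathcal{P}_n$. The sensitivity to synchronism is $\mu(f_{128,n})=|\mathcal{D}(f_{128,n})|/(3^n-2^{n+1}+2)$. *)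

(* Defs.v *)
From HB Require Import structures.
From mathcomp Require Import all_boot all_order all_algebra.
From mathcomp Require Import boolp.
Set Implicit Arguments. Unset Strict Implicit. Unset Printing Implicit Defensive.
Import GRing.Theory Num.Theory.

Definition cfg (n : nat) := {ffun 'I_n -> bool}.

Lemma ord_pos n (i : 'I_n) : 0 < n.
Proof. exact: leq_ltn_trans (leq0n i) (ltn_ord i). Qed.

Definition cprev n (i : 'I_n) : 'I_n :=
  Ordinal (ltn_pmod (i + n.-1) (ord_pos i)).
Definition cnext n (i : 'I_n) : 'I_n :=
  Ordinal (ltn_pmod i.+1 (ord_pos i)).

Definition r128 (a b c : bool) : bool := [&& a, b & c].
Definition f128 n (x : cfg n) : cfg n :=
  [ffun i => r128 (x (cprev i)) (x i) (x (cnext i))].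

Definition fblock n (B : {set 'I_n}) (x : cfg n) : cfg n :=
  [ffun i => if i \in B then f128 x i else x i].

Definition fsched n (D : seq {set 'I_n}) (x : cfg n) : cfg n :=
  foldl (fun y B => fblock B y) x D.

Definition is_schedule n (D : seq {set 'I_n}) : Prop :=
  [/\ all (fun B => B != set0) D,
      pairwise (fun A B : {set 'I_n} => [disjoint A & B]) D &
      \bigcup_(B <- D) B = [set: 'I_n]].

(* The dynamics (transition digraph with arcs (x, f^(D) x)) is determined by
   the map f^(D); we represent it by that map as a finite function. *)
Definition dynamics n (D : seq {set 'I_n}) : {ffun cfg n -> cfg n} :=
  [ffun x => fsched D x].

Definition dyn_set n : {set {ffun cfg n -> cfg n}} :=
  [set F | `[< exists D : seq {set 'I_n}, is_schedule D /\ F = dynamics D >]].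

Definition mu128 (n : nat) : rat :=
  (#|dyn_set n|%:R / (3%:R ^+ n - 2%:R ^+ n.+1 + 2%:R))%R.

(* Main.v *)
Require Import Defs.
From HB Require Import structures.
From mathcomp Require Import all_boot all_order all_algebra.
From mathcomp Require Import boolp zify.
From mathcomp Require Import lra.
Set Implicit Arguments. Unset Strict Implicit. Unset Printing Implicit Defensive.

Section Basics.
Variable n : nat.

Definition sh (i : 'I_n) (d : nat) : 'I_n := Ordinal (ltn_pmod (i + d) (ord_pos i)).
Lemma val_sh i d : val (sh i d) = (i + d) %% n. Proof. by []. Qed.
Lemma sh0 i : sh i 0 = i.
Proof. by apply: val_inj; rewrite /= addn0 modn_small. Qed.
Lemma shD i a b : sh (sh i a) b = sh i (a + b).
Proof. by apply: val_inj => /=; rewrite modnDml addnA. Qed.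
Lemma shDn i a : sh i (a + n) = sh i a.
Proof. by apply: val_inj => /=; rewrite addnA modnDr. Qed.
Lemma sh_mod i a : sh i (a %% n) = sh i a.
Proof. by apply: val_inj => /=; rewrite modnDmr. Qed.
Lemma sh_inj i a b : a < n -> b < n -> sh i a = sh i b -> a = b.
Proof.
move=> ha hb /(congr1 val) /= /eqP; rewrite eqn_modDl !modn_small //.
by move/eqP.
Qed.
Definition off (i j : 'I_n) : nat := (j + (n - i)) %% n.
Lemma off_lt i j : off i j < n.
Proof. exact: ltn_pmod (ord_pos i). Qed.
Lemma sh_off i j : sh i (off i j) = j.
Proof.
apply: val_inj => /=; rewrite /off modnDmr.
have -> : i + (j + (n - i)) = j + n by have := ltn_ord i; lia.
by rewrite modnDr modn_small.
Qed.
Lemma off_sh i d : off i (sh i d) = d %% n.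
Proof.
rewrite /off /= modnDml.
have -> : i + d + (n - i) = d + n by have := ltn_ord i; lia.
by rewrite modnDr.
Qed.
Lemma off_eq i j d : d < n -> sh i d = j -> off i j = d.
Proof. by move=> hd <-; rewrite off_sh modn_small. Qed.
Lemma off_self i : off i i = 0.
Proof. by apply: off_eq; [exact: ord_pos i| rewrite sh0]. Qed.
Lemma cprevE i : cprev i = sh i n.-1.
Proof. exact: val_inj. Qed.
Lemma cnextE i : cnext i = sh i 1.
Proof. by apply: val_inj => /=; rewrite addn1. Qed.
Lemma sh_addmod i a b : sh i (a + b %% n) = sh i (a + b).
Proof. by apply: val_inj => /=; rewrite !addnA modnDmr. Qed.

Lemma find_iota_le (p : pred nat) m : find p (iota 0 m) <= m.
Proof. by rewrite -{2}(size_iota 0 m) find_size. Qed.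
Lemma find_iota_before (p : pred nat) m t : t < find p (iota 0 m) -> ~~ p t.
Proof.
move=> ht; have hm : t < m by apply: leq_trans ht (find_iota_le _ _).
by have := before_find 0 ht; rewrite nth_iota // add0n => ->.
Qed.
Lemma find_iota_hit (p : pred nat) m : find p (iota 0 m) < m -> p (find p (iota 0 m)).
Proof.
move=> h; have hh : has p (iota 0 m) by rewrite has_find size_iota.
by have := nth_find 0 hh; rewrite nth_iota // add0n.
Qed.
Lemma find_iota_eq (p : pred nat) m k : k <= m -> (forall t, t < k -> ~~ p t) ->
  (k < m -> p k) -> find p (iota 0 m) = k.
Proof.
move=> hk hb hh; case: (ltngtP (find p (iota 0 m)) k) => // h.
  have := find_iota_hit (leq_trans h hk); by rewrite (negbTE (hb _ h)).
have := find_iota_before h; by rewrite hh // (leq_trans h (find_iota_le _ _)).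
Qed.
Lemma find_iota_le_hit (p : pred nat) m t : t < m -> p t -> find p (iota 0 m) <= t.
Proof.
move=> ht hp; rewrite leqNgt; apply/negP => h.
by have := find_iota_before h; rewrite hp.
Qed.
Lemma find_iota_ge (p : pred nat) m k : k <= m -> (forall t, t < k -> ~~ p t) ->
  k <= find p (iota 0 m).
Proof.
move=> hk hb; rewrite leqNgt; apply/negP => h.
have := find_iota_hit (leq_trans h hk); by rewrite (negbTE (hb _ h)).
Qed.
Lemma find_iota_prefix (p q : pred nat) m t0 : t0 < m -> p t0 ->
  (forall t, t <= t0 -> p t = q t) -> find p (iota 0 m) = find q (iota 0 m).
Proof.
move=> ht hp hpq; set k := find p (iota 0 m).
have hk : k <= t0 by apply: find_iota_le_hit.
symmetry; apply: find_iota_eq.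
- by rewrite (leq_trans hk) // ltnW.
- move=> t htk; rewrite -hpq; last by rewrite ltnW // (leq_trans htk).
  exact: (find_iota_before htk).
- move=> hkm; rewrite -hpq //; exact: (find_iota_hit hkm).
Qed.

Notation L := (option bool).
Definition Lt : L := Some true.
Definition Gt : L := Some false.
Definition Eq : L := None.
Definition labT := {ffun 'I_n -> L}.
Implicit Types v w : labT.
Definition valid (v : labT) := [exists k, v k == Lt] == [exists k, v k == Gt].

Definition lrun (v : labT) i := find (fun t => v (sh i (n - t.+1)) != Lt) (iota 0 n).
Definition rrun (v : labT) i := find (fun t => v (sh i t) != Gt) (iota 0 n).

Lemma lrun_le v i : lrun v i <= n. Proof. exact: find_iota_le. Qed.
Lemma rrun_le v i : rrun v i <= n. Proof. exact: find_iota_le. Qed.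
Lemma lrunP v i t : t < lrun v i -> v (sh i (n - t.+1)) = Lt.
Proof. by move/find_iota_before; rewrite negbK => /eqP. Qed.
Lemma rrunP v i t : t < rrun v i -> v (sh i t) = Gt.
Proof. by move/find_iota_before; rewrite negbK => /eqP. Qed.
Lemma lrun_stop v i : lrun v i < n -> v (sh i (n - (lrun v i).+1)) != Lt.
Proof. exact: find_iota_hit. Qed.
Lemma rrun_stop v i : rrun v i < n -> v (sh i (rrun v i)) != Gt.
Proof. exact: find_iota_hit. Qed.
Lemma lrun_is v i k : k <= n -> (forall t, t < k -> v (sh i (n - t.+1)) = Lt) ->
  (k < n -> v (sh i (n - k.+1)) != Lt) -> lrun v i = k.
Proof. by move=> hk hb hh; apply: find_iota_eq => // t /hb ->. Qed.
Lemma rrun_is v i k : k <= n -> (forall t, t < k -> v (sh i t) = Gt) ->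
  (k < n -> v (sh i k) != Gt) -> rrun v i = k.
Proof. by move=> hk hb hh; apply: find_iota_eq => // t /hb ->. Qed.
Lemma lrun_ub v i t : t < n -> v (sh i (n - t.+1)) != Lt -> lrun v i <= t.
Proof. exact: find_iota_le_hit. Qed.
Lemma rrun_ub v i t : t < n -> v (sh i t) != Gt -> rrun v i <= t.
Proof. exact: find_iota_le_hit. Qed.
Lemma lrun_lb v i k : k <= n -> (forall t, t < k -> v (sh i (n - t.+1)) = Lt) -> k <= lrun v i.
Proof. by move=> hk hb; apply: find_iota_ge => // t /hb ->. Qed.
Lemma rrun_lb v i k : k <= n -> (forall t, t < k -> v (sh i t) = Gt) -> k <= rrun v i.
Proof. by move=> hk hb; apply: find_iota_ge => // t /hb ->. Qed.

Lemma lrun_lt v i : (exists k, v k != Lt) -> lrun v i < n.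
Proof.
case=> k hk; have hn := ord_pos i.
apply: (@leq_ltn_trans (n.-1 - off i k)); last by lia.
apply: lrun_ub; first by lia.
have -> : n - (n.-1 - off i k).+1 = off i k by have := off_lt i k; lia.
by rewrite sh_off.
Qed.
Lemma rrun_lt v i : (exists k, v k != Gt) -> rrun v i < n.
Proof.
case=> k hk; apply: (@leq_ltn_trans (off i k)); last exact: off_lt.
by apply: rrun_ub; rewrite ?off_lt // sh_off.
Qed.

Lemma lrun0 v i : v (sh i n.-1) != Lt -> lrun v i = 0.
Proof.
move=> h; have hn := ord_pos i; apply: lrun_is => // _.
by rewrite subn1.
Qed.
Lemma rrun0 v i : v i != Gt -> rrun v i = 0.
Proof. by move=> h; apply: rrun_is => // _; rewrite sh0. Qed.

Lemma lrun_succ v i : v (sh i n.-1) = Lt -> (exists k, v k != Lt) ->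
  lrun v i = (lrun v (sh i n.-1)).+1.
Proof.
move=> h1 hex; have hn := ord_pos i.
set L := lrun v (sh i n.-1).
have hL : L < n by apply: lrun_lt.
apply: lrun_is => //.
- case=> [_|t ht]; first by rewrite subn1.
  have := lrunP ht; rewrite shD.
  have -> : n.-1 + (n - t.+1) = (n - t.+2) + n by lia.
  by rewrite shDn.
- move=> hL1; have := lrun_stop hL; rewrite shD -/L.
  have -> : n.-1 + (n - L.+1) = (n - L.+2) + n by lia.
  by rewrite shDn.
Qed.
Lemma rrun_succ v i : v i = Gt -> (exists k, v k != Gt) ->
  rrun v i = (rrun v (sh i 1)).+1.
Proof.
move=> h1 hex; set R := rrun v (sh i 1).
have hR : R < n by apply: rrun_lt.
apply: rrun_is => //.
- by case=> [_|t ht]; [rewrite sh0 | have := rrunP ht; rewrite shD add1n].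
- by move=> _; have := rrun_stop hR; rewrite shD add1n.
Qed.

Definition inW (v : labT) i j :=
  (off i j <= (rrun v i).+1) || (n <= off i j + (lrun v i).+1).
Definition PhiV (v : labT) (x : cfg n) i := [forall j, inW v i j ==> x j].
Definition PhiF (v : labT) : {ffun cfg n -> cfg n} := [ffun x => [ffun i => PhiV v x i]].

Definition sat (v : labT) i := n <= lrun v i + rrun v i + 3.

End Basics.

Section Rec.
Variable n : nat.
Implicit Types v w : labT n.
Notation L := (option bool).

Lemma eq_sh_off (i j : 'I_n) d : d < n -> (j == sh i d) = (off i j == d).
Proof.
move=> hd; apply/eqP/eqP => [->|<-]; first by rewrite off_sh modn_small.
by rewrite sh_off.
Qed.
Lemma eq_off0 (i j : 'I_n) : (j == i) = (off i j == 0).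
Proof. by rewrite -{1}(sh0 i) eq_sh_off // (ord_pos i). Qed.
Lemma off_prev (i j : 'I_n) : off (sh i n.-1) j = (off i j).+1 %% n.
Proof.
have hn := ord_pos i; apply: off_eq; first exact: ltn_pmod.
rewrite shD sh_addmod.
have -> : n.-1 + (off i j).+1 = off i j + n by lia.
by rewrite shDn sh_off.
Qed.
Lemma off_next (i j : 'I_n) : off (sh i 1) j = (off i j + n.-1) %% n.
Proof.
have hn := ord_pos i; apply: off_eq; first exact: ltn_pmod.
rewrite shD sh_addmod.
have -> : 1 + (off i j + n.-1) = off i j + n by lia.
by rewrite shDn sh_off.
Qed.
Lemma modS_cases d : d < n -> d.+1 %% n = if d == n.-1 then 0 else d.+1.
Proof.
move=> hd; case: eqP => h.
  have -> : d.+1 = 0 + n by lia.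
  by rewrite modnDr mod0n.
by rewrite modn_small //; lia.
Qed.
Lemma modP_cases d : d < n -> (d + n.-1) %% n = if d == 0 then n.-1 else d.-1.
Proof.
move=> hd; case: eqP => h.
  by rewrite h add0n modn_small //; lia.
have -> : d + n.-1 = d.-1 + n by lia.
by rewrite modnDr modn_small //; lia.
Qed.
Lemma shn (i : 'I_n) : sh i n = i.
Proof. by have := shDn i 0; rewrite add0n sh0. Qed.
Lemma sh_prev_next (i : 'I_n) : sh (sh i n.-1) 1 = i.
Proof. have hn := ord_pos i; by rewrite shD addn1 prednK // shn. Qed.
Lemma sh_next_prev (i : 'I_n) : sh (sh i 1) n.-1 = i.
Proof. have hn := ord_pos i; by rewrite shD add1n prednK // shn. Qed.

Lemma valid_nLt v : 0 < n -> valid v -> exists k, v k != Lt.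
Proof.
move=> hn hv; case: (boolP [exists k, v k != Lt]) => [/existsP//|].
rewrite negb_exists => /forallP hall.
have k0 : 'I_n := Ordinal hn.
move: hv; rewrite /valid.
have -> : [exists k, v k == Lt] by apply/existsP; exists k0; have := hall k0; rewrite negbK.
move/eqP/esym/existsP => [k /eqP hk]; have := hall k; by rewrite hk.
Qed.
Lemma valid_nGt v : 0 < n -> valid v -> exists k, v k != Gt.
Proof.
move=> hn hv; case: (boolP [exists k, v k != Gt]) => [/existsP//|].
rewrite negb_exists => /forallP hall.
have k0 : 'I_n := Ordinal hn.
move: hv; rewrite /valid.
have -> : [exists k, v k == Gt] by apply/existsP; exists k0; have := hall k0; rewrite negbK.
move/eqP/existsP => [k /eqP hk]; have := hall k; by rewrite hk.
Qed.

Lemma inW_rec v (i j : 'I_n) : 1 < n -> (exists k, v k != Lt) -> (exists k, v k != Gt) ->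
  inW v i j = [|| j == i,
    (if v (sh i n.-1) == Lt then inW v (sh i n.-1) j else j == sh i n.-1)
  | (if v i == Gt then inW v (sh i 1) j else j == sh i 1)].
Proof.
move=> hn hL hG.
have hn0 : 0 < n by lia.
rewrite /inW off_prev off_next eq_off0 !eq_sh_off //; last by lia.
have hd := off_lt i j.
have hl := lrun_lt i hL; have hr := rrun_lt i hG.
have hl' := lrun_lt (sh i n.-1) hL; have hr' := rrun_lt (sh i 1) hG.
have E : (lrun v i = if v (sh i n.-1) == Lt then (lrun v (sh i n.-1)).+1 else 0).
  by case: eqP => h; [rewrite (lrun_succ h hL) | rewrite lrun0 //; apply/eqP].
have F : (rrun v i = if v i == Gt then (rrun v (sh i 1)).+1 else 0).
  by case: eqP => h; [rewrite (rrun_succ h hG) | rewrite rrun0 //; apply/eqP].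
have E' : v (sh i n.-1) == Lt -> rrun v (sh i n.-1) = 0.
  by move/eqP=> h; rewrite rrun0 // h.
have F' : v i == Gt -> lrun v (sh i 1) = 0.
  by move/eqP=> h; rewrite lrun0 // sh_next_prev h.
rewrite E F; move: E' F' hl' hr'.
move: (lrun v (sh i n.-1)) (rrun v (sh i 1)) (rrun v (sh i n.-1)) (lrun v (sh i 1)) => a b c e.
move: (off i j) hd => d hd.
have [->|d0] : d = n.-1 \/ d < n.-1 by lia.
  have -> : (n.-1).+1 %% n = 0 by rewrite prednK // modnn.
  have -> : (n.-1 + n.-1) %% n = n.-2.
    have -> : n.-1 + n.-1 = n.-2 + n by lia.
    by rewrite modnDr modn_small //; lia.
  by case: (v (sh i n.-1) == Lt); case: (v i == Gt) => /= h1 h2 h3 h4; rewrite ?h1 ?h2 //; lia.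
rewrite (modn_small (_ : d.+1 < n)); last by lia.
have [->|d1] : d = 0 \/ 0 < d by lia.
  rewrite add0n modn_small; last by lia.
  by case: (v (sh i n.-1) == Lt); case: (v i == Gt) => /= h1 h2 h3 h4; rewrite ?h1 ?h2 //; lia.
have -> : (d + n.-1) %% n = d.-1.
  have -> : d + n.-1 = d.-1 + n by lia.
  by rewrite modnDr modn_small //; lia.
by case: (v (sh i n.-1) == Lt); case: (v i == Gt) => /= h1 h2 h3 h4; rewrite ?h1 ?h2 //; lia.
Qed.

Lemma forall_or3 (P Q R : pred 'I_n) (x : cfg n) :
  [forall j, [|| P j, Q j | R j] ==> x j] =
  [&& [forall j, P j ==> x j], [forall j, Q j ==> x j] & [forall j, R j ==> x j]].
Proof.
apply/forallP/and3P => [h|[/forallP h1 /forallP h2 /forallP h3] j].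
  split; apply/forallP => j; apply/implyP => hj; apply: (implyP (h j)); by rewrite hj ?orbT.
by apply/implyP => /or3P [/(implyP (h1 j))|/(implyP (h2 j))|/(implyP (h3 j))].
Qed.
Lemma forall_eq1 (a : 'I_n) (x : cfg n) : [forall j, (j == a) ==> x j] = x a.
Proof.
apply/forallP/idP => [/(_ a)|h j]; first by rewrite eqxx.
by apply/implyP => /eqP ->.
Qed.

Lemma PhiV_rec v x (i : 'I_n) : 1 < n -> (exists k, v k != Lt) -> (exists k, v k != Gt) ->
  PhiV v x i = r128 (if v (sh i n.-1) == Lt then PhiV v x (sh i n.-1) else x (sh i n.-1))
                    (x i) (if v i == Gt then PhiV v x (sh i 1) else x (sh i 1)).
Proof.
move=> hn hL hG; rewrite {1}/PhiV.
rewrite (eq_forallb (fun j => congr1 (fun b => b ==> x j) (@inW_rec v i j hn hL hG))).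
rewrite forall_or3 forall_eq1 /r128.
by case: ifP => _; case: ifP => _; rewrite ?forall_eq1 /PhiV andbCA.
Qed.

End Rec.

Section Sched.
Variable n : nat.
Implicit Types v w : labT n.

Definition pos (D : seq {set 'I_n}) (i : 'I_n) := find (fun B : {set 'I_n} => i \in B) D.
Definition labP (f : 'I_n -> nat) : labT n :=
  [ffun k => if f k < f (sh k 1) then Lt else if f (sh k 1) < f k then Gt else Eq].

Lemma labP_Lt f k : (labP f k == Lt) = (f k < f (sh k 1)).
Proof. by rewrite ffunE; case: ltnP => //; case: ltnP. Qed.
Lemma labP_Gt f k : (labP f k == Gt) = (f (sh k 1) < f k).
Proof. rewrite ffunE; case: ltnP => h1; case: ltnP => h2 //; lia. Qed.

Lemma mono_sh (f : 'I_n -> nat) : (forall k, f k <= f (sh k 1)) -> forall k d, f k <= f (sh k d).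
Proof.
move=> h k; elim=> [|d IH]; first by rewrite sh0.
by rewrite -addn1 -shD (leq_trans IH (h _)).
Qed.

Lemma labP_valid f : 0 < n -> valid (labP f).
Proof.
move=> hn; rewrite /valid; apply/eqP; apply/idP/idP => /existsP [k0 hk0].
- case E: [exists k, labP f k == Gt] => //.
  move/negbT: E; rewrite negb_exists => /forallP hall.
  have hm : forall k, f k <= f (sh k 1).
    by move=> k; have := hall k; rewrite labP_Gt -leqNgt.
  have := mono_sh hm (sh k0 1) n.-1; rewrite sh_next_prev.
  by move: hk0; rewrite labP_Lt; lia.
- case E: [exists k, labP f k == Lt] => //.
  move/negbT: E; rewrite negb_exists => /forallP hall.
  have hm : forall k, f (sh k 1) <= f k.
    by move=> k; have := hall k; rewrite labP_Lt -leqNgt.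
  have hm' : forall k d, f (sh k d) <= f k.
    move=> k; elim=> [|d IH]; first by rewrite sh0.
    by rewrite -addn1 -shD (leq_trans (hm _) IH).
  have := hm' (sh k0 1) n.-1; rewrite sh_next_prev.
  by move: hk0; rewrite labP_Gt; lia.
Qed.

Lemma fsched_step1 (D : seq {set 'I_n}) x t i (v : labT n) : 1 < n ->
  (exists k, v k != Lt) -> (exists k, v k != Gt) -> v = labP (pos D) ->
  t = pos D i ->
  f128 [ffun i0 => if pos D i0 < t then PhiV v x i0 else x i0] i = PhiV v x i.
Proof.
move=> hn hL hG ev ti.
rewrite /f128 ffunE (PhiV_rec x i hn hL hG) cprevE cnextE !ffunE.
rewrite ev labP_Lt labP_Gt sh_prev_next -ev -ti ltnn.
by case: (pos D (sh i n.-1) < t); case: (pos D (sh i 1) < t).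
Qed.

Lemma fsched_step (D : seq {set 'I_n}) x t (v : labT n) : 1 < n ->
  (exists k, v k != Lt) -> (exists k, v k != Gt) -> v = labP (pos D) ->
  (forall i : 'I_n, has (fun B : {set 'I_n} => i \in B) D) ->
  (forall (i : 'I_n) t, i \in nth set0 D t -> t = pos D i) ->
  fblock (nth set0 D t) [ffun i => if pos D i < t then PhiV v x i else x i] =
  [ffun i => if pos D i < t.+1 then PhiV v x i else x i].
Proof.
move=> hn hL hG ev cov uq.
apply/ffunP => i.
set y := [ffun i => if pos D i < t then PhiV v x i else x i].
have -> : fblock (nth set0 D t) y i = if i \in nth set0 D t then f128 y i else y i by rewrite ffunE.
rewrite [RHS]ffunE.
case hi: (i \in nth set0 D t).
- have ti := uq _ _ hi.
  rewrite (fsched_step1 x hn hL hG ev ti) -ti ltnSn.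
  by [].
- have : pos D i != t.
    by apply/eqP => h; move: hi; rewrite -h (nth_find set0 (cov i)).
  move=> h; rewrite /y ffunE.
  by have -> : (pos D i < t.+1) = (pos D i < t) by rewrite ltnS leq_eqVlt (negbTE h).
Qed.

Lemma fsched_Phi (D : seq {set 'I_n}) : 1 < n ->
  (forall i : 'I_n, has (fun B : {set 'I_n} => i \in B) D) ->
  (forall (i : 'I_n) t, i \in nth set0 D t -> t = pos D i) ->
  forall x, fsched D x = [ffun i => PhiV (labP (pos D)) x i].
Proof.
move=> hn cov uq x.
have hn0 : 0 < n by lia.
have hv := labP_valid (pos D) hn0.
have hL := valid_nLt hn0 hv; have hG := valid_nGt hn0 hv.
have key : forall t, t <= size D ->
  foldl (fun y B => fblock B y) x (take t D) =
  [ffun i => if pos D i < t then PhiV (labP (pos D)) x i else x i].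
  elim=> [_|t IH ht].
    by rewrite take0 /=; apply/ffunP => i; rewrite ffunE.
  rewrite (take_nth set0 ht) foldl_rcons.
  rewrite IH; last exact: ltnW.
  exact: (fsched_step x t hn hL hG erefl cov uq).
rewrite /fsched -{1}(take_size D) key //.
apply/ffunP => i; rewrite !ffunE.
by have := cov i; rewrite has_find => ->.
Qed.

Lemma sched_hyps (D : seq {set 'I_n}) : is_schedule D ->
  (forall i : 'I_n, has (fun B : {set 'I_n} => i \in B) D) /\ (forall (i : 'I_n) t, i \in nth set0 D t -> t = pos D i).
Proof.
case=> _ hpw hcov.
have cov : forall i : 'I_n, has (fun B : {set 'I_n} => i \in B) D.
  move=> i; have : i \in \bigcup_(B <- D) B by rewrite hcov inE.
  by rewrite bigcup_seq => /bigcupP [B hB hiB]; apply/hasP; exists B.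
split=> // i t hi.
have hsz : t < size D.
  rewrite ltnNge; apply/negP => h; move: hi; by rewrite nth_default // inE.
have hp : pos D i < size D by rewrite /pos -has_find.
have hpi : i \in nth set0 D (pos D i) by exact: (nth_find set0 (cov i)).
case: (ltngtP t (pos D i)) => // h.
- have := (elimT (pairwiseP set0) hpw) t (pos D i) hsz hp h.
  by move/disjointFr => /(_ _ hi); rewrite hpi.
- have := (elimT (pairwiseP set0) hpw) (pos D i) t hp hsz h.
  by move/disjointFr => /(_ _ hpi); rewrite hi.
Qed.

End Sched.

Section Real.
Variable n : nat.
Implicit Types v w : labT n.

Lemma count_rot (c : 'I_n) (p : pred 'I_n) :
  count (fun t => p (sh c t)) (iota 0 n) = count p (enum 'I_n).
Proof.
have -> : (fun t => p (sh c t)) = preim (sh c) p by [].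
rewrite -count_map; apply/permP; apply: uniq_perm.
- rewrite map_inj_in_uniq ?iota_uniq // => a b.
  by rewrite !mem_iota !add0n => ha hb /sh_inj; apply.
- exact: enum_uniq.
- move=> k; rewrite mem_enum; apply/mapP; exists (off c k); last by rewrite sh_off.
  by rewrite mem_iota add0n off_lt.
Qed.

Definition cntL v (c : 'I_n) d := count (fun t => v (sh c t) == Lt) (iota 0 d).
Definition cntG v (c : 'I_n) d := count (fun t => v (sh c t) == Gt) (iota 0 d).
Lemma cntL_S v c d : cntL v c d.+1 = cntL v c d + (v (sh c d) == Lt).
Proof. by rewrite /cntL -addn1 iotaD count_cat /= add0n addn0. Qed.
Lemma cntG_S v c d : cntG v c d.+1 = cntG v c d + (v (sh c d) == Gt).
Proof. by rewrite /cntG -addn1 iotaD count_cat /= add0n addn0. Qed.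
Lemma cntG_le v c d : cntG v c d <= d.
Proof. by rewrite /cntG (leq_trans (count_size _ _)) // size_iota. Qed.

Definition rk v (c : 'I_n) (k : 'I_n) := n + cntL v c (off c k) - cntG v c (off c k).

Lemma label_cases (a : option bool) : [\/ a = Lt, a = Gt | a = Eq].
Proof. by case: a => [[]|]; [apply: Or31|apply: Or32|apply: Or33]. Qed.

Definition PLc v := count (fun k => v k == Lt) (enum 'I_n).
Definition PGc v := count (fun k => v k == Gt) (enum 'I_n).
Lemma rk_lab v (c : 'I_n) :
  let PL := PLc v in let PG := PGc v in
  [\/ v (sh c n.-1) = Gt /\ PG <= PL, v (sh c n.-1) = Lt /\ PL <= PG
    | v (sh c n.-1) = Eq /\ PL = PG] ->
  labP (rk v c) = v.
Proof.
move=> PL PG hcut.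
have hn := ord_pos c.
have eL : cntL v c n = PL by exact: (count_rot c (fun k => v k == Lt)).
have eG : cntG v c n = PG by exact: (count_rot c (fun k => v k == Gt)).
apply/ffunP => k; rewrite ffunE /rk.
have hd := off_lt c k.
have ek : k = sh c (off c k) by rewrite sh_off.
have e1 : sh k 1 = sh c (off c k).+1 by rewrite {1}ek shD addn1.
have [hdn|hdn] : off c k = n.-1 \/ off c k < n.-1 by lia.
- have ec : sh k 1 = c by rewrite e1 hdn prednK // shn.
  have eL' : cntL v c n.-1 + (v (sh c n.-1) == Lt) = PL by rewrite -cntL_S prednK.
  have eG' : cntG v c n.-1 + (v (sh c n.-1) == Gt) = PG by rewrite -cntG_S prednK.
  have hk : v k = v (sh c n.-1) by rewrite ek hdn.
  rewrite ec off_self hdn hk (_ : cntL v c 0 = 0) // (_ : cntG v c 0 = 0) //.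
  have := cntG_le v c n.-1.
  case: hcut => [[hv h]|[hv h]|[hv h]]; rewrite hv /= in eL' eG' * => hle;
  by repeat (case: ltnP => ?); first [done | exfalso; lia].
- rewrite e1 off_sh modn_small; last by lia.
  rewrite cntL_S cntG_S -ek.
  have := cntG_le v c (off c k).
  by case: (label_cases (v k)) => ->; rewrite /= ?addn0 ?addn1 => hle;
    repeat (case: ltnP => ?); first [done | exfalso; lia].
Qed.

Lemma valid_cut v : 0 < n -> valid v -> exists c : 'I_n,
  [\/ v (sh c n.-1) = Gt /\ PGc v <= PLc v, v (sh c n.-1) = Lt /\ PLc v <= PGc v
    | v (sh c n.-1) = Eq /\ PLc v = PGc v].
Proof.
move=> hn hv; set PL := PLc v; set PG := PGc v.
have exL : 0 < PL -> exists k, v k = Lt.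
  rewrite -has_count => /hasP [k _ /eqP hk]; by exists k.
have exG : 0 < PG -> exists k, v k = Gt.
  rewrite -has_count => /hasP [k _ /eqP hk]; by exists k.
have vLG : (exists k, v k = Lt) -> exists k, v k = Gt.
  move=> [k hk]; move: hv; rewrite /valid.
  have -> : [exists k, v k == Lt] by apply/existsP; exists k; rewrite hk.
  by move/eqP/esym/existsP => [k' /eqP]; exists k'.
have vGL : (exists k, v k = Gt) -> exists k, v k = Lt.
  move=> [k hk]; move: hv; rewrite /valid.
  have -> : [exists k, v k == Gt] by apply/existsP; exists k; rewrite hk.
  by move/eqP/existsP => [k' /eqP]; exists k'.
case: (ltngtP PG PL) => h.
- have [k hk] := vLG (exL (leq_ltn_trans (leq0n _) h)).
  exists (sh k 1); rewrite sh_next_prev hk; apply: Or31; split=> //; lia.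
- have [k hk] := vGL (exG (leq_ltn_trans (leq0n _) h)).
  exists (sh k 1); rewrite sh_next_prev hk; apply: Or32; split=> //; lia.
- exists (Ordinal hn); case: (label_cases (v (sh (Ordinal hn) n.-1))) => ->.
  + by apply: Or32; split=> //; lia.
  + by apply: Or31; split=> //; lia.
  + by apply: Or33.
Qed.

Lemma labP_real v : 0 < n -> valid v -> exists f : 'I_n -> nat, labP f = v.
Proof.
move=> hn hv; have [c hc] := valid_cut hn hv.
by exists (rk v c); apply: rk_lab.
Qed.

Definition lev (f : 'I_n -> nat) t := [set i | f i == t].
Definition schedF (f : 'I_n -> nat) := [seq B <- [seq lev f t | t <- iota 0 (\max_i f i).+1] | B != set0].

Lemma foldl_filter0 (s : seq {set 'I_n}) x :
  foldl (fun y B => fblock B y) x [seq B <- s | B != set0] = foldl (fun y B => fblock B y) x s.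
Proof.
elim: s x => [//|B s IH] x /=.
case: eqP => [->|_] /=; last exact: IH.
rewrite IH; congr foldl; apply/ffunP => i; by rewrite ffunE inE.
Qed.

Lemma schedF_ok (f : 'I_n -> nat) : 1 < n ->
  is_schedule (schedF f) /\ dynamics (schedF f) = PhiF (labP f).
Proof.
move=> hn.
set M := (\max_i f i).+1.
set D' := [seq lev f t | t <- iota 0 M].
have fM : forall i, f i < M by move=> i; rewrite ltnS leq_bigmax.
have posE : forall i, pos D' i = f i.
  move=> i; rewrite /pos find_map; apply: find_iota_eq.
  - exact: ltnW.
  - by move=> t ht; rewrite /preim /= inE; apply/eqP => h; lia.
  - by move=> _; rewrite /preim /= inE.
split.
- split.
  + exact: filter_all.
  + apply: pairwise_filter; rewrite pairwise_map.
    apply: (@sub_pairwise _ ltn); last by rewrite -sorted_pairwise ?iota_ltn_sorted //; exact: ltn_trans.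
    move=> a b hab /=; apply/pred0P => i /=; rewrite !inE; case: eqP => // ->; apply/eqP; lia.
  + apply/setP => i; rewrite inE bigcup_seq; apply/bigcupP; exists (lev f (f i)); last by rewrite inE.
    rewrite mem_filter; apply/andP; split.
      by apply/set0Pn; exists i; rewrite inE.
    by apply: map_f; rewrite mem_iota add0n fM.
- apply/ffunP => x; rewrite !ffunE /fsched foldl_filter0.
  have := @fsched_Phi n D' hn.
  have cov : forall i : 'I_n, has (fun B : {set 'I_n} => i \in B) D'.
    by move=> i; rewrite has_find; have := posE i; rewrite /pos => ->; rewrite size_map size_iota fM.
  have uq : forall (i : 'I_n) t, i \in nth set0 D' t -> t = pos D' i.
    move=> i t; rewrite posE; case: (ltnP t M) => ht.
      by rewrite (nth_map 0) ?size_iota // nth_iota // add0n inE => /eqP.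
    by rewrite nth_default ?inE // size_map size_iota.
  move=> /(_ cov uq x); rewrite /fsched => -> ; apply/ffunP => i; rewrite !ffunE.
  have -> : labP (pos D') = labP f by apply/ffunP => k; rewrite !ffunE !posE.
  by [].
Qed.

End Real.

Section Data.
Variable n : nat.
Implicit Types v w : labT n.

Definition Vset := [set v : labT n | valid v].

Lemma dyn_setE : 1 < n -> dyn_set n = (@PhiF n) @: Vset.
Proof.
move=> hn; have hn0 : 0 < n by lia.
apply/setP => F; rewrite inE; apply/asboolP/imsetP.
- case=> D [hD ->]; have [cov uq] := sched_hyps hD.
  exists (labP (pos D)); first by rewrite inE labP_valid.
  apply/ffunP => x; rewrite !ffunE (fsched_Phi hn cov uq x).
  by apply/ffunP => i; rewrite !ffunE.
- case=> v; rewrite inE => hv ->.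
  have [f hf] := labP_real hn0 hv.
  have [hs hd] := schedF_ok f hn.
  by exists (schedF f); split => //; rewrite hd hf.
Qed.

Definition delta (j0 : 'I_n) : cfg n := [ffun j => j != j0].
Lemma PhiV_delta v i j0 : PhiV v (delta j0) i = ~~ inW v i j0.
Proof.
apply/forallP/idP => [h|h j].
  by apply/negP => hin; have := h j0; rewrite hin ffunE eqxx.
by rewrite ffunE; apply/implyP => hj; apply/eqP => e; move: h; rewrite -e hj.
Qed.

Lemma PhiF_inW v w : PhiF v = PhiF w -> forall i j, inW v i j = inW w i j.
Proof.
move=> e i j; have := congr1 (fun F : {ffun cfg n -> cfg n} => F (delta j) i) e; rewrite !ffunE !PhiV_delta.
by move/negb_inj.
Qed.

Lemma sat_inW v i : sat v i = [forall j, inW v i j].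
Proof.
apply/idP/forallP => [hs j|h].
  by rewrite /inW; move: hs; rewrite /sat; lia.
rewrite /sat leqNgt; apply/negP => hlt.
have hr : (rrun v i).+2 < n by lia.
have := h (sh i (rrun v i).+2); rewrite /inW off_sh modn_small //; lia.
Qed.

Definition deq v w := forall i, sat v i = sat w i /\
  (~~ sat w i -> lrun v i = lrun w i /\ rrun v i = rrun w i).

Lemma PhiF_deq v w : PhiF v = PhiF w -> deq v w.
Proof.
move=> e i; have E := PhiF_inW e i.
have Es : sat v i = sat w i.
  rewrite !sat_inW; apply: eq_forallb => j; exact: E.
split=> // hw; have hv : ~~ sat v i by rewrite Es.
move: hv hw; rewrite /sat -!ltnNge => hv hw.
split.
- apply/eqP; rewrite eqn_leq; apply/andP; split; rewrite leqNgt; apply/negP => hlt.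
  + have := E (sh i (n - (lrun w i).+2)); rewrite /inW off_sh modn_small; lia.
  + have := E (sh i (n - (lrun v i).+2)); rewrite /inW off_sh modn_small; lia.
- apply/eqP; rewrite eqn_leq; apply/andP; split; rewrite leqNgt; apply/negP => hlt.
  + have := E (sh i (rrun w i).+2); rewrite /inW off_sh modn_small; lia.
  + have := E (sh i (rrun v i).+2); rewrite /inW off_sh modn_small; lia.
Qed.

Lemma deq_PhiF v w : (forall i, (sat v i /\ sat w i) \/ (lrun v i = lrun w i /\ rrun v i = rrun w i)) ->
  PhiF v = PhiF w.
Proof.
move=> h; apply/ffunP => x; rewrite !ffunE; apply/ffunP => i; rewrite !ffunE.
rewrite /PhiV; apply: eq_forallb => j; congr (_ ==> _).
case: (h i) => [[s1 s2]|[e1 e2]].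
  move: s1 s2; rewrite !sat_inW => /forallP -> /forallP -> //.
by rewrite /inW e1 e2.
Qed.

Lemma deq_sym v w : deq v w -> deq w v.
Proof.
move=> h i; have [e1 e2] := h i; split=> // hv.
have hw : ~~ sat w i by rewrite -e1.
by have [a b] := e2 hw; split.
Qed.

Lemma shE (c : 'I_n) a b : (a == b) || (a == b + n) -> sh c a = sh c b.
Proof. by case/orP => /eqP ->; rewrite ?shDn. Qed.

Lemma lrunPc v (c : 'I_n) e t : t < lrun v (sh c e) -> v (sh c (e + (n - t.+1))) = Lt.
Proof. by move/lrunP; rewrite shD. Qed.
Lemma rrunPc v (c : 'I_n) e t : t < rrun v (sh c e) -> v (sh c (e + t)) = Gt.
Proof. by move/rrunP; rewrite shD. Qed.
Lemma lrun_ubc v (c : 'I_n) e t : t < n -> v (sh c (e + (n - t.+1))) != Lt -> lrun v (sh c e) <= t.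
Proof. by move=> ht h; apply: lrun_ub; rewrite // shD. Qed.
Lemma rrun_ubc v (c : 'I_n) e t : t < n -> v (sh c (e + t)) != Gt -> rrun v (sh c e) <= t.
Proof. by move=> ht h; apply: rrun_ub; rewrite // shD. Qed.
Lemma lrun_lbc v (c : 'I_n) e k : k <= n -> (forall t, t < k -> v (sh c (e + (n - t.+1))) = Lt) -> k <= lrun v (sh c e).
Proof. by move=> hk h; apply: lrun_lb => // t ht; rewrite shD h. Qed.
Lemma rrun_lbc v (c : 'I_n) e k : k <= n -> (forall t, t < k -> v (sh c (e + t)) = Gt) -> k <= rrun v (sh c e).
Proof. by move=> hk h; apply: rrun_lb => // t ht; rewrite shD h. Qed.
Lemma lrun_isc v (c : 'I_n) e k : k <= n -> (forall t, t < k -> v (sh c (e + (n - t.+1))) = Lt) ->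
  (k < n -> v (sh c (e + (n - k.+1))) != Lt) -> lrun v (sh c e) = k.
Proof.
move=> hk h1 h2; apply: lrun_is => //; first by move=> t ht; rewrite shD h1.
by move=> hkn; rewrite shD h2.
Qed.
Lemma rrun_isc v (c : 'I_n) e k : k <= n -> (forall t, t < k -> v (sh c (e + t)) = Gt) ->
  (k < n -> v (sh c (e + k)) != Gt) -> rrun v (sh c e) = k.
Proof.
move=> hk h1 h2; apply: rrun_is => //; first by move=> t ht; rewrite shD h1.
by move=> hkn; rewrite shD h2.
Qed.
Lemma lrun_stopc v (c : 'I_n) e : lrun v (sh c e) < n -> v (sh c (e + (n - (lrun v (sh c e)).+1))) != Lt.
Proof. by move/lrun_stop; rewrite shD. Qed.
Lemma rrun_stopc v (c : 'I_n) e : rrun v (sh c e) < n -> v (sh c (e + rrun v (sh c e))) != Gt.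
Proof. by move/rrun_stop; rewrite shD. Qed.

Lemma label_eq (a b : option bool) : (a == Lt) = (b == Lt) -> (a == Gt) = (b == Gt) -> a = b.
Proof. by case: a => [[]|]; case: b => [[]|]. Qed.
Lemma label_cases3 (a : option bool) : [\/ a = Lt, a = Gt | a = Eq].
Proof. by case: a => [[]|]; [apply: Or31|apply: Or32|apply: Or33]. Qed.

Lemma lrun_pos v (k : 'I_n) : (0 < lrun v (sh k 1)) = (v k == Lt).
Proof.
have hn := ord_pos k.
have e : sh (sh k 1) (n - 1) = k by rewrite subn1 sh_next_prev.
apply/idP/idP => h.
  by have := lrunP h; rewrite e => ->.
apply: (@lrun_lb n v (sh k 1) 1) => //; case=> // _; by rewrite e (eqP h).
Qed.
Lemma rrun_pos v (k : 'I_n) : (0 < rrun v k) = (v k == Gt).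
Proof.
apply/idP/idP => h.
  by have := rrunP h; rewrite sh0 => ->.
apply: (@rrun_lb n v k 1) => //; first exact: ord_pos k. case=> // _; by rewrite sh0 (eqP h).
Qed.

Lemma edge_eq v w (k : 'I_n) : lrun v (sh k 1) = lrun w (sh k 1) -> rrun v k = rrun w k -> v k = w k.
Proof. by move=> e1 e2; apply: label_eq; [rewrite -!lrun_pos e1 | rewrite -!rrun_pos e2]. Qed.

End Data.

Section LemX.
Variable n : nat.
Hypothesis Hn : 6 < n.
Implicit Types v w : labT n.

Lemma lemX v w (c : 'I_n) : valid w -> deq v w ->
  v (sh c n.-1) = Lt -> w (sh c n.-1) != Lt ->
  [/\ w (sh c n.-1) = Eq, (forall d, d < n.-1 -> v (sh c d) = w (sh c d)),
      (forall d, d < n - 3 -> w (sh c d) = Gt) &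
      (w (sh c (n-2)) == Lt) || (w (sh c (n-3)) == Lt)].
Proof.
move=> hw hd hvL hwL.
have hn0 : 0 < n by lia.
have tr : forall i, ~~ sat w i -> lrun v i = lrun w i /\ rrun v i = rrun w i.
  by move=> i; case: (hd i).
have trv : forall i, ~~ sat v i -> ~~ sat w i.
  by move=> i; case: (hd i) => ->.
have c0 : sh c 0 = c := sh0 c.
have sv : sat v c.
  apply/negPn/negP => hns.
  have [e1 _] := tr c (trv c hns).
  have h1 : 1 <= lrun v c.
    apply: (@lrun_lb n v c 1); first lia.
    case=> // _; by rewrite subn1.
  have h0 : lrun w c = 0 by apply: lrun0.
  lia.
have sw : sat w c by case: (hd c) => <-.
have lw0 : lrun w c = 0 by apply: lrun0.
set R := rrun w c.
have hR1 : n - 3 <= R by move: sw; rewrite /sat lw0 -/R; lia.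
have hWG : forall d, d < R -> w (sh c d) = Gt by move=> d hdR; exact: rrunP.
have hR2 : R <= n - 2.
  rewrite leqNgt; apply/negP => hR.
  have noLt : forall k, w k != Lt.
    move=> k; rewrite -(sh_off c k).
    have := off_lt c k; case: (ltnP (off c k) n.-1) => h1 h2.
      by rewrite hWG //; lia.
    by have -> : off c k = n.-1 by lia.
  move: hw; rewrite /valid.
  have -> : [exists k, w k == Gt] by apply/existsP; exists c; rewrite -{1}c0 hWG //; lia.
  move/eqP/existsP => [k]; by rewrite (negbTE (noLt k)).
have hRn : R < n by lia.
have hWR : w (sh c R) != Gt by exact: rrun_stop.
have l2 : lrun w (sh c 2) = 0.
  apply: lrun0; rewrite shD (@shE n c _ 1); last by apply/orP; right; lia.
  by rewrite hWG //; lia.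
have r2 : rrun w (sh c 2) = R - 2.
  apply: rrun_isc; first lia.
  - move=> t ht; apply: hWG; lia.
  - by move=> _; rewrite (_ : 2 + (R - 2) = R) //; lia.
have ns2 : ~~ sat w (sh c 2) by rewrite /sat l2 r2; lia.
have [lv2 rv2] := tr _ ns2.
have hV1 : v (sh c 1) != Lt.
  have := @lrun_stopc n v c 2; rewrite lv2 l2 => /(_ hn0).
  by rewrite (@shE n c _ 1) //; apply/orP; right; lia.
have hVG : forall d, 2 <= d -> d < R -> v (sh c d) = Gt.
  move=> d h1 h2; have := @rrunPc n v c 2 (d - 2).
  rewrite rv2 r2 (_ : 2 + (d - 2) = d); last lia.
  apply; lia.
have wE : w (sh c n.-1) = Eq.
  case: (label_cases3 (w (sh c n.-1))) => // h; first by rewrite h in hwL.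
  exfalso.
  have rw : R.+1 <= rrun w (sh c n.-1).
    apply: rrun_lbc; first lia.
    case=> [_|t ht]; first by rewrite addn0.
    rewrite (@shE n c _ t); last by apply/orP; right; lia.
    apply: hWG; lia.
  have swn : sat w (sh c n.-1) by rewrite /sat; lia.
  have svn : sat v (sh c n.-1) by case: (hd (sh c n.-1)) => ->.
  have rv : rrun v (sh c n.-1) = 0 by apply: rrun0; rewrite hvL.
  have lv : lrun v (sh c n.-1) <= n.-1 - R.
    apply: lrun_ubc; first lia.
    rewrite (@shE n c _ R.-1); last by apply/orP; right; lia.
    by rewrite hVG //; lia.
  move: svn; rewrite /sat rv; lia.
have unsW : forall e, R <= e -> e < n -> ~~ sat w (sh c e).
  move=> e h1 h2.
  have la : lrun w (sh c e) <= e - R.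
    apply: lrun_ubc; first lia.
    rewrite (@shE n c _ R.-1); last by apply/orP; right; lia.
    rewrite hWG //; lia.
  have ra : rrun w (sh c e) <= n.-1 - e.
    apply: rrun_ubc; first lia.
    by rewrite (_ : e + (n.-1 - e) = n.-1) ?wE //; lia.
  rewrite /sat; lia.
have gapEq : forall d, R <= d -> d < n.-1 -> v (sh c d) = w (sh c d).
  move=> d h1 h2; apply: edge_eq.
  - rewrite shD addn1; have [-> _] := tr _ (unsW d.+1 ltac:(lia) ltac:(lia)) => //.
  - by have [_ ->] := tr _ (unsW d ltac:(lia) ltac:(lia)).
have V1 : v (sh c 1) = Gt.
  have [hR3|hR3] : R = n - 3 \/ R = n - 2 by lia.
  - have l1 : lrun w (sh c 1) = 0.
      apply: lrun0; rewrite shD (@shE n c _ 0); last by apply/orP; right; lia.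
      rewrite hWG //; lia.
    have r1 : rrun w (sh c 1) = R - 1.
      apply: rrun_isc; first lia.
      - move=> t ht; apply: hWG; lia.
      - by move=> _; rewrite (_ : 1 + (R - 1) = R) //; lia.
    have ns1 : ~~ sat w (sh c 1) by rewrite /sat l1 r1; lia.
    have [_ rv1] := tr _ ns1.
    have := @rrunPc n v c 1 0; rewrite addn0; apply; rewrite rv1 r1; lia.
  - case: (label_cases3 (v (sh c 1))) => // h; first by rewrite h in hV1.
    exfalso.
    have rv1 : rrun v (sh c 1) = 0 by apply: rrun0; rewrite h.
    have lv1 : lrun v (sh c 1) <= 3.
      apply: lrun_ubc; first lia.
      rewrite (@shE n c _ (n - 3)); last by apply/orP; left; lia.
      rewrite hVG //; lia.
    have nsv : ~~ sat v (sh c 1) by rewrite /sat; lia.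
    have [_ rw1] := tr _ (trv _ nsv).
    have : 0 < rrun w (sh c 1) by rewrite rrun_pos hWG //; lia.
    lia.
have V0 : v (sh c 0) = Gt.
  case: (label_cases3 (v (sh c 0))) => h //; exfalso.
  - have rv0 : rrun v c = 0 by apply: rrun0; rewrite -{1}c0 h.
    have lv0 : lrun v (sh c 0) <= n - R.
      apply: lrun_ubc; first lia.
      rewrite (@shE n c _ R.-1); last by apply/orP; left; lia.
      rewrite hVG //; lia.
    move: sv; rewrite /sat -{1}c0; lia.
  - have rv0 : rrun v c = 0 by apply: rrun0; rewrite -{1}c0 h.
    have lv0 : lrun v (sh c 0) <= n - R.
      apply: lrun_ubc; first lia.
      rewrite (@shE n c _ R.-1); last by apply/orP; left; lia.
      rewrite hVG //; lia.
    move: sv; rewrite /sat -{1}c0; lia.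
split => //.
- move=> d hd'.
  have [->|d0] : d = 0 \/ 0 < d by lia.
    by rewrite V0 hWG //; lia.
  have [->|d1] : d = 1 \/ 1 < d by lia.
    by rewrite V1 hWG //; lia.
  case: (ltnP d R) => hdR.
    by rewrite hVG ?hWG //; lia.
  by apply: gapEq.
- by move=> d hd'; apply: hWG; lia.
- move: hw; rewrite /valid.
  have -> : [exists k, w k == Gt] by apply/existsP; exists c; rewrite -{1}c0 hWG //; lia.
  move/eqP/existsP => [k /eqP hk].
  move: hk; rewrite -(sh_off c k).
  have := off_lt c k.
  case: (ltnP (off c k) (n-3)) => h1 h2.
    rewrite hWG //; lia.
  have [e|[e|e]] : off c k = n - 3 \/ off c k = n - 2 \/ off c k = n.-1 by lia.
  + by rewrite e => ->; rewrite orbT.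
  + by rewrite e => ->.
  + by rewrite e wE.
Qed.

End LemX.

Section LemY.
Variable n : nat.
Hypothesis Hn : 6 < n.
Implicit Types v w : labT n.

Lemma lemY v w (c : 'I_n) : valid w -> deq v w ->
  v (sh c 0) = Gt -> w (sh c 0) != Gt ->
  [/\ w (sh c 0) = Eq, (forall d, 0 < d -> d < n -> v (sh c d) = w (sh c d)),
      (forall d, 3 <= d -> d < n -> w (sh c d) = Lt) &
      (w (sh c 1) == Gt) || (w (sh c 2) == Gt)].
Proof.
move=> hw hd hvG hwG.
have hn0 : 0 < n by lia.
have tr : forall i, ~~ sat w i -> lrun v i = lrun w i /\ rrun v i = rrun w i.
  by move=> i; case: (hd i).
have trv : forall i, ~~ sat v i -> ~~ sat w i.
  by move=> i; case: (hd i) => ->.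
have c0 : sh c 0 = c := sh0 c.
have sv : sat v c.
  apply/negPn/negP => hns.
  have [_ e1] := tr c (trv c hns).
  have h1 : 0 < rrun v c by rewrite rrun_pos -{1}c0 hvG.
  have h0 : rrun w c = 0 by apply: rrun0; rewrite -{1}c0.
  lia.
have sw : sat w c by case: (hd c) => <-.
have rw0 : rrun w c = 0 by apply: rrun0; rewrite -{1}c0.
set L := lrun w c.
have hL1 : n - 3 <= L by move: sw; rewrite /sat rw0 -/L; lia.
have hWL : forall d, n - L <= d -> d < n -> w (sh c d) = Lt.
  move=> d h1 h2; have := @lrunP n w c (n.-1 - d).
  rewrite (_ : n - (n.-1 - d).+1 = d); last lia.
  apply; rewrite -/L; lia.
have hL2 : L <= n - 2.
  rewrite leqNgt; apply/negP => hL.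
  have noGt : forall k, w k != Gt.
    move=> k; rewrite -(sh_off c k).
    have := off_lt c k; case: (posnP (off c k)) => h1 h2.
      by rewrite h1.
    by rewrite hWL //; lia.
  move: hw; rewrite /valid.
  have -> : [exists k, w k == Lt] by apply/existsP; exists (sh c n.-1); rewrite hWL //; lia.
  move/eqP/esym/existsP => [k]; by rewrite (negbTE (noGt k)).
have hLn : L < n by lia.
have hWLs : w (sh c (n - L.+1)) != Lt by exact: lrun_stop.
have r2 : rrun w (sh c (n-2)) = 0.
  by apply: rrun0; rewrite hWL //; lia.
have l2 : lrun w (sh c (n-2)) = L - 2.
  apply: lrun_isc; first lia.
  - move=> t ht; rewrite (@shE n c _ (n - t.+3)); last by apply/orP; right; lia.
    apply: hWL; lia.
  - move=> _; rewrite (@shE n c _ (n - L.+1)) //; apply/orP; right; lia.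
have ns2 : ~~ sat w (sh c (n-2)) by rewrite /sat l2 r2; lia.
have [lv2 rv2] := tr _ ns2.
have hV2 : v (sh c (n-2)) != Gt.
  have := @rrun_stopc n v c (n-2); rewrite rv2 r2 addn0; apply; lia.
have hVL : forall d, n - L <= d -> d <= n - 3 -> v (sh c d) = Lt.
  move=> d h1 h2; have := @lrunPc n v c (n-2) (n - 3 - d).
  rewrite lv2 l2 (@shE n c _ d); last by apply/orP; right; lia.
  apply; lia.
have wE : w (sh c 0) = Eq.
  case: (label_cases3 (w (sh c 0))) => // h; last by rewrite h in hwG.
  exfalso.
  have lw : L.+1 <= lrun w (sh c 1).
    apply: lrun_lbc; first lia.
    case=> [_|t ht].
      by rewrite (@shE n c _ 0) //; apply/orP; right; lia.
    rewrite (@shE n c _ (n - t.+1)); last by apply/orP; left; lia.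
    apply: hWL; lia.
  have swn : sat w (sh c 1) by rewrite /sat; lia.
  have svn : sat v (sh c 1) by case: (hd (sh c 1)) => ->.
  have lv : lrun v (sh c 1) = 0 by apply: lrun0; rewrite sh_next_prev -{1}c0 hvG.
  have rv : rrun v (sh c 1) <= n - L - 1.
    apply: rrun_ubc; first lia.
    rewrite (@shE n c _ (n - L)); last by apply/orP; left; lia.
    by rewrite hVL //; lia.
  move: svn; rewrite /sat lv; lia.
have unsW : forall e, 0 < e -> e <= n - L -> ~~ sat w (sh c e).
  move=> e h1 h2.
  have la : lrun w (sh c e) <= e.-1.
    apply: lrun_ubc; first lia.
    by rewrite (@shE n c _ 0) ?wE //; apply/orP; right; lia.
  have ra : rrun w (sh c e) <= n - L - e.
    apply: rrun_ubc; first lia.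
    rewrite (_ : e + (n - L - e) = n - L); last lia.
    by rewrite hWL //; lia.
  rewrite /sat; lia.
have gapEq : forall d, 0 < d -> d < n - L -> v (sh c d) = w (sh c d).
  move=> d h1 h2; apply: edge_eq.
  - rewrite shD addn1; have [-> _] := tr _ (unsW d.+1 ltac:(lia) ltac:(lia)) => //.
  - by have [_ ->] := tr _ (unsW d ltac:(lia) ltac:(lia)).
have V2 : v (sh c (n-2)) = Lt.
  have [hL3|hL3] : L = n - 3 \/ L = n - 2 by lia.
  - have r1 : rrun w (sh c n.-1) = 0 by apply: rrun0; rewrite hWL //; lia.
    have l1 : lrun w (sh c n.-1) = L - 1.
      apply: lrun_isc; first lia.
      - move=> t ht; rewrite (@shE n c _ (n - t.+2)); last by apply/orP; right; lia.
        apply: hWL; lia.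
      - move=> _; rewrite (@shE n c _ (n - L.+1)) //; apply/orP; right; lia.
    have ns1 : ~~ sat w (sh c n.-1) by rewrite /sat l1 r1; lia.
    have [lv1 _] := tr _ ns1.
    have := @lrunPc n v c n.-1 0; rewrite (@shE n c (n.-1 + (n - 1)) (n-2)); last by apply/orP; right; lia.
    apply; rewrite lv1 l1; lia.
  - case: (label_cases3 (v (sh c (n-2)))) => h; first by [].
      by rewrite h in hV2.
    exfalso.
    have lv1 : lrun v (sh c n.-1) = 0.
      apply: lrun0; rewrite shD (@shE n c _ (n-2)) ?h //; apply/orP; right; lia.
    have rv1 : rrun v (sh c n.-1) <= 3.
      apply: rrun_ubc; [lia|]; rewrite (@shE n c _ 2); [rewrite hVL //; lia | apply/orP; right; lia].
    have nsv : ~~ sat v (sh c n.-1) by rewrite /sat; lia.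
    have [lw1 _] := tr _ (trv _ nsv).
    have : 0 < lrun w (sh (sh c (n-2)) 1) by rewrite lrun_pos hWL //; lia.
    rewrite shD (_ : n - 2 + 1 = n.-1); last lia.
    lia.
have V1 : v (sh c n.-1) = Lt.
  have hnl : v (sh c n.-1) == Lt.
    apply/negPn/negP => h.
    have lv0 : lrun v c = 0 by apply: lrun0.
    have rv0 : rrun v (sh c 0) <= n - L.
      apply: rrun_ubc; [lia|]; rewrite add0n hVL //; lia.
    move: sv; rewrite /sat -{2}c0; lia.
  exact/eqP.
split => //.
- move=> d h1 h2.
  case: (ltnP d (n - L)) => hdL.
    by apply: gapEq.
  have [e|[e|e]] : d <= n - 3 \/ d = n - 2 \/ d = n.-1 by lia.
  + by rewrite hVL ?hWL //; lia.
  + by rewrite e V2 hWL //; lia.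
  + by rewrite e V1 hWL //; lia.
- by move=> d h1 h2; apply: hWL; lia.
- move: hw; rewrite /valid.
  have -> : [exists k, w k == Lt] by apply/existsP; exists (sh c n.-1); rewrite hWL //; lia.
  move/eqP/esym/existsP => [k /eqP hk].
  move: hk; rewrite -(sh_off c k).
  have := off_lt c k.
  case: (ltnP (off c k) 3) => h1 h2; last first.
    rewrite hWL //; lia.
  have [e|[e|e]] : off c k = 0 \/ off c k = 1 \/ off c k = 2 by lia.
  + by rewrite e wE.
  + by rewrite e => ->.
  + by rewrite e => ->; rewrite orbT.
Qed.

End LemY.

Section G.
Variable n : nat.
Hypothesis Hn : 6 < n.
Implicit Types v w : labT n.
Notation L := (option bool).

Definition mkL (c : 'I_n) (F : nat -> L) : labT n := [ffun k => F (off c k)].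
Lemma mkLE c F m : mkL c F (sh c m) = F (m %% n).
Proof. by rewrite ffunE off_sh. Qed.
Lemma off_sh2 (c : 'I_n) o m : o < n -> off (sh c o) (sh c m) = (m + (n - o)) %% n.
Proof.
move=> ho; apply: off_eq; first exact: ltn_pmod (ord_pos c).
rewrite shD sh_addmod (@shE n c _ m) //; apply/orP; right; lia.
Qed.
Lemma mkLE' c o F m : o < n -> mkL (sh c o) F (sh c m) = F ((m + (n - o)) %% n).
Proof. by move=> ho; rewrite ffunE off_sh2. Qed.
Lemma modE a b : b < n -> (a == b) || (a == b + n) -> a %% n = b.
Proof. by move=> hb /orP [] /eqP ->; rewrite ?modnDr modn_small. Qed.

Definition FA (x y : L) (d : nat) := if d == 0 then Gt else if d == 1 then x else if d == 2 then y else Lt.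
Definition FpA (x y : L) (d : nat) := if d == 0 then Eq else if d == 1 then x else if d == 2 then y else Lt.
Definition FB (x y : L) (d : nat) := if d == n.-1 then Lt else if d == n - 2 then x else if d == n - 3 then y else Gt.
Definition FpB (x y : L) (d : nat) := if d == n.-1 then Eq else if d == n - 2 then x else if d == n - 3 then y else Gt.

Lemma FA0 x y : FA x y 0 = Gt. Proof. by []. Qed.
Lemma FA1 x y : FA x y 1 = x. Proof. by []. Qed.
Lemma FA2 x y : FA x y 2 = y. Proof. by []. Qed.
Lemma FA3 x y d : 3 <= d -> FA x y d = Lt.
Proof. by rewrite /FA; case: d => [|[|[|d]]]. Qed.
Lemma FpA0 x y : FpA x y 0 = Eq. Proof. by []. Qed.
Lemma FpA1 x y : FpA x y 1 = x. Proof. by []. Qed.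
Lemma FpA2 x y : FpA x y 2 = y. Proof. by []. Qed.
Lemma FpA3 x y d : 3 <= d -> FpA x y d = Lt.
Proof. by rewrite /FpA; case: d => [|[|[|d]]]. Qed.
Lemma FB1 x y : FB x y n.-1 = Lt. Proof. by rewrite /FB eqxx. Qed.
Lemma FB2 x y : FB x y (n-2) = x.
Proof. rewrite /FB ifN ?eqxx //; apply/eqP; lia. Qed.
Lemma FB3 x y : FB x y (n-3) = y.
Proof. rewrite /FB ifN; last by apply/eqP; lia. rewrite ifN ?eqxx //; apply/eqP; lia. Qed.
Lemma FB4 x y d : d <= n - 4 -> FB x y d = Gt.
Proof.
move=> hd; rewrite /FB ifN; last by apply/eqP; lia.
rewrite ifN; last by apply/eqP; lia. rewrite ifN //; apply/eqP; lia.
Qed.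
Lemma FpB1 x y : FpB x y n.-1 = Eq. Proof. by rewrite /FpB eqxx. Qed.
Lemma FpB2 x y : FpB x y (n-2) = x.
Proof. rewrite /FpB ifN ?eqxx //; apply/eqP; lia. Qed.
Lemma FpB3 x y : FpB x y (n-3) = y.
Proof. rewrite /FpB ifN; last by apply/eqP; lia. rewrite ifN ?eqxx //; apply/eqP; lia. Qed.
Lemma FpB4 x y d : d <= n - 4 -> FpB x y d = Gt.
Proof.
move=> hd; rewrite /FpB ifN; last by apply/eqP; lia.
rewrite ifN; last by apply/eqP; lia. rewrite ifN //; apply/eqP; lia.
Qed.

Definition dpred (q : bool * (L * L)) :=
  if q.1 then (q.2.1 == Lt) || (q.2.2 == Lt) else (q.2.1 == Gt) || (q.2.2 == Gt).
Definition Dom := [set p : 'I_n * (bool * (L * L)) | dpred p.2].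
Definition gg (p : 'I_n * (bool * (L * L))) : labT n :=
  if p.2.1 then mkL p.1 (FB p.2.2.1 p.2.2.2) else mkL p.1 (FA p.2.2.1 p.2.2.2).
Definition pp (p : 'I_n * (bool * (L * L))) : labT n :=
  if p.2.1 then mkL p.1 (FpB p.2.2.1 p.2.2.2) else mkL p.1 (FpA p.2.2.1 p.2.2.2).
Definition Nset := gg @: Dom.

Lemma mkL_ext v (c : 'I_n) F : (forall d, d < n -> v (sh c d) = F d) -> v = mkL c F.
Proof.
move=> h; apply/ffunP => k; rewrite -(sh_off c k) mkLE modn_small ?off_lt //.
exact: h (off_lt c k).
Qed.

Lemma in_Nset_B v (c : 'I_n) w :
  (forall d, d < n.-1 -> v (sh c d) = w (sh c d)) -> v (sh c n.-1) = Lt ->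
  (forall d, d < n - 3 -> w (sh c d) = Gt) ->
  (w (sh c (n-2)) == Lt) || (w (sh c (n-3)) == Lt) -> v \in Nset.
Proof.
move=> h1 h2 h3 h4; apply/imsetP; exists (c, (true, (w (sh c (n-2)), w (sh c (n-3))))).
  by rewrite inE /dpred /=.
rewrite /gg /=; apply: mkL_ext => d hd.
have [e|[e|[e|e]]] : d = n.-1 \/ d = n - 2 \/ d = n - 3 \/ d <= n - 4 by lia.
- by rewrite e FB1.
- by rewrite e FB2 h1 //; lia.
- by rewrite e FB3 h1 //; lia.
- by rewrite FB4 // h1 ?h3 //; lia.
Qed.

Lemma in_Nset_A v (c : 'I_n) w :
  (forall d, 0 < d -> d < n -> v (sh c d) = w (sh c d)) -> v (sh c 0) = Gt ->
  (forall d, 3 <= d -> d < n -> w (sh c d) = Lt) ->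
  (w (sh c 1) == Gt) || (w (sh c 2) == Gt) -> v \in Nset.
Proof.
move=> h1 h2 h3 h4; apply/imsetP; exists (c, (false, (w (sh c 1), w (sh c 2)))).
  by rewrite inE /dpred /=.
rewrite /gg /=; apply: mkL_ext => d hd.
have [e|[e|[e|e]]] : d = 0 \/ d = 1 \/ d = 2 \/ 3 <= d by lia.
- by rewrite e FA0.
- by rewrite e FA1 h1 //; lia.
- by rewrite e FA2 h1 //; lia.
- by rewrite FA3 // h1 ?h3 //; lia.
Qed.

Lemma inj_main v w : valid v -> valid w -> PhiF v = PhiF w -> v \notin Nset -> w \notin Nset -> v = w.
Proof.
move=> hv hw e nv nw; have hd := PhiF_deq e; have hd' := deq_sym hd.
apply/ffunP => k; apply: label_eq.
- have c1 : sh (sh k 1) n.-1 = k by rewrite sh_next_prev.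
  case E1: (v k == Lt); case E2: (w k == Lt) => //.
  + have a1 : v (sh (sh k 1) n.-1) = Lt by rewrite c1 (eqP E1).
    have a2 : w (sh (sh k 1) n.-1) != Lt by rewrite c1 E2.
    have [_ h2 h3 h4] := lemX Hn hw hd a1 a2.
    by rewrite (in_Nset_B h2 a1 h3 h4) in nv.
  + have a1 : w (sh (sh k 1) n.-1) = Lt by rewrite c1 (eqP E2).
    have a2 : v (sh (sh k 1) n.-1) != Lt by rewrite c1 E1.
    have [_ h2 h3 h4] := lemX Hn hv hd' a1 a2.
    by rewrite (in_Nset_B h2 a1 h3 h4) in nw.
- have c1 : sh k 0 = k by rewrite sh0.
  case E1: (v k == Gt); case E2: (w k == Gt) => //.
  + have a1 : v (sh k 0) = Gt by rewrite c1 (eqP E1).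
    have a2 : w (sh k 0) != Gt by rewrite c1 E2.
    have [_ h2 h3 h4] := lemY Hn hw hd a1 a2.
    by rewrite (in_Nset_A h2 a1 h3 h4) in nv.
  + have a1 : w (sh k 0) = Gt by rewrite c1 (eqP E2).
    have a2 : v (sh k 0) != Gt by rewrite c1 E1.
    have [_ h2 h3 h4] := lemY Hn hv hd' a1 a2.
    by rewrite (in_Nset_A h2 a1 h3 h4) in nw.
Qed.

End G.

Section K.
Variable n : nat.
Hypothesis Hn : 6 < n.
Implicit Types v w : labT n.
Notation L := (option bool).

Lemma evalH (c : 'I_n) o F G m a b : o < n -> mkL c F = mkL (sh c o) G ->
  a < n -> b < n -> (m == a) || (m == a + n) -> (m + (n - o) == b) || (m + (n - o) == b + n) ->
  F a = G b.
Proof.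
move=> ho H ha hb h1 h2; have := congr1 (fun f : labT n => f (sh c m)) H.
by rewrite /= mkLE mkLE' // (modE ha h1) (modE hb h2).
Qed.

Lemma valid_mk (c : 'I_n) F a b : a < n -> b < n -> F a = Lt -> F b = Gt -> valid (mkL c F).
Proof.
move=> ha hb h1 h2; rewrite /valid.
have -> : [exists k, mkL c F k == Lt] by apply/existsP; exists (sh c a); rewrite mkLE modn_small // h1.
have -> : [exists k, mkL c F k == Gt] by apply/existsP; exists (sh c b); rewrite mkLE modn_small // h2.
by [].
Qed.

Lemma gg_valid p : p \in Dom n -> valid (gg p).
Proof.
case: p => c [[] [x y]]; rewrite inE /dpred /gg /=.
- by move=> _; apply: (@valid_mk c _ n.-1 0); rewrite ?FB1 ?FB4 //; lia.
- by move=> _; apply: (@valid_mk c _ 3 0); rewrite ?FA0 ?FA3 //; lia.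
Qed.
Lemma pp_valid p : p \in Dom n -> valid (pp p).
Proof.
case: p => c [[] [x y]]; rewrite inE /dpred /pp /=.
- case/orP => /eqP h.
  + by apply: (@valid_mk c _ (n-2) 0); rewrite ?FpB2 ?FpB4 //; lia.
  + by apply: (@valid_mk c _ (n-3) 0); rewrite ?FpB3 ?FpB4 //; lia.
- case/orP => /eqP h.
  + by apply: (@valid_mk c _ 3 1); rewrite ?FpA1 ?FpA3 //; lia.
  + by apply: (@valid_mk c _ 3 2); rewrite ?FpA2 ?FpA3 //; lia.
Qed.

Lemma Nset_sub : Nset n \subset Vset n.
Proof. by apply/subsetP => v /imsetP [p hp ->]; rewrite inE gg_valid. Qed.

Lemma lrun_eqbits v w : (forall k, (v k == Lt) = (w k == Lt)) -> forall i, lrun v i = lrun w i.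
Proof. by move=> h i; rewrite /lrun; apply: eq_find => t; rewrite h. Qed.
Lemma rrun_eqbits v w : (forall k, (v k == Gt) = (w k == Gt)) -> forall i, rrun v i = rrun w i.
Proof. by move=> h i; rewrite /rrun; apply: eq_find => t; rewrite h. Qed.

Lemma gp_PhiF p : p \in Dom n -> PhiF (gg p) = PhiF (pp p).
Proof.
case: p => c [[] [x y]] _; rewrite /gg /pp /=; apply: deq_PhiF => i.
-
  have eR := @rrun_eqbits (mkL c (FB n x y)) (mkL c (FpB n x y)).
  have eR' : forall i, rrun (mkL c (FB n x y)) i = rrun (mkL c (FpB n x y)) i.
    apply: eR => k; rewrite -(sh_off c k) !mkLE /FB /FpB.
    by case: ifP.
  have [ei|ni] := eqVneq i c.
  + left; rewrite ei /sat; split.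
    * have : n - 3 <= rrun (mkL c (FB n x y)) c.
        apply: rrun_lb; first lia.
        by move=> t ht; rewrite mkLE modn_small ?FB4 //; lia.
      lia.
    * have : n - 3 <= rrun (mkL c (FpB n x y)) c.
        apply: rrun_lb; first lia.
        by move=> t ht; rewrite mkLE modn_small ?FpB4 //; lia.
      lia.
  + right; split; last exact: eR'.
    have ei : i = sh c (off c i) by rewrite sh_off.
    have he : 0 < off c i.
      rewrite lt0n; apply/negP => /eqP h; move: ni; by rewrite ei h sh0 eqxx.
    have hl := off_lt c i.
    rewrite /lrun; apply: (@find_iota_prefix _ _ _ (off c i).-1); first lia.
      rewrite {1}ei shD mkLE (@modE n _ 0); first by rewrite FB4 //; lia.
        lia.
      apply/orP; right; lia.
    move=> t ht; rewrite {1 2}ei !shD !mkLE.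
    rewrite (@modE n _ ((off c i).-1 - t)); [|lia|apply/orP; right; lia].
    rewrite /FB /FpB; have -> : (((off c i).-1 - t) == n.-1) = false by apply/negbTE/eqP; lia.
    by [].
-
  have eL' : forall i, lrun (mkL c (FA x y)) i = lrun (mkL c (FpA x y)) i.
    apply: lrun_eqbits => k; rewrite -(sh_off c k) !mkLE /FA /FpA.
    by case: ifP.
  have [ei|ni] := eqVneq i c.
  + left; rewrite ei /sat; split.
    * have : n - 3 <= lrun (mkL c (FA x y)) c.
        apply: lrun_lb; first lia.
        by move=> t ht; rewrite mkLE modn_small ?FA3 //; lia.
      lia.
    * have : n - 3 <= lrun (mkL c (FpA x y)) c.
        apply: lrun_lb; first lia.
        by move=> t ht; rewrite mkLE modn_small ?FpA3 //; lia.
      lia.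
  + right; split; first exact: eL'.
    have ei : i = sh c (off c i) by rewrite sh_off.
    have he : 0 < off c i.
      rewrite lt0n; apply/negP => /eqP h; move: ni; by rewrite ei h sh0 eqxx.
    have hl := off_lt c i.
    rewrite /rrun; apply: (@find_iota_prefix _ _ _ (n.-1 - off c i)); first lia.
      rewrite {1}ei shD mkLE (@modE n _ n.-1); first by rewrite FA3 //; lia.
        lia.
      apply/orP; left; lia.
    move=> t ht; rewrite {1 2}ei !shD !mkLE.
    rewrite (@modE n _ (off c i + t)); [|lia|apply/orP; left; lia].
    rewrite /FA /FpA; have -> : ((off c i + t) == 0) = false by apply/negbTE/eqP; lia.
    by [].
Qed.

End K.

Section K2.
Variable n : nat.
Hypothesis Hn : 6 < n.
Implicit Types v w : labT n.
Notation L := (option bool).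

Ltac ev o H m a b := move: (@evalH n Hn _ o _ _ m a b ltac:(lia) H ltac:(lia) ltac:(lia) ltac:(lia) ltac:(lia)).

Ltac fin := rewrite ?FB1 ?FpB1 ?FA0 ?FpA0 ?(FB4 Hn) ?(FpB4 Hn) ?FA3 ?FpA3; try lia.

Lemma rebase (c c' : 'I_n) : exists2 o, o < n & c' = sh c o.
Proof. by exists (off c c'); rewrite ?off_lt ?sh_off. Qed.

Lemma AB_neq (c c' : 'I_n) x y x' y' : mkL c (FA x y) <> mkL c' (FB n x' y').
Proof.
move=> H; have [o ho ec] := rebase c c'; subst c'.
have [h|h] : 3 <= o \/ o <= 2 by lia.
- by ev o H o o 0; fin.
- by ev o H 3 3 (3 - o); fin.
Qed.

Lemma gg_inj : {in Dom n &, injective (@gg n)}.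
Proof.
move=> [c [b [x y]]] [c' [b' [x' y']]] _ _; rewrite /gg /=.
have [o ho ec] := rebase c c'; subst c'.
case: b; case: b' => H.
-
  have [h|[h|[h|h]]] : o = 0 \/ o = n.-1 \/ o = n - 2 \/ (0 < o /\ o <= n - 3) by lia.
  + subst o.
    ev 0 H (n-2) (n-2) (n-2); rewrite !FB2 // => ->.
    by ev 0 H (n-3) (n-3) (n-3); rewrite !FB3 // sh0 => ->.
  + by ev o H n.-1 n.-1 0; fin.
  + by ev o H n.-1 n.-1 1; fin.
  + by ev o H o.-1 o.-1 n.-1; fin.
- by have := AB_neq (esym H).
- by have := AB_neq H.
-
  have [h|[h|h]] : o = 0 \/ (0 < o /\ o <= 2) \/ 3 <= o by lia.
  + subst o.
    ev 0 H 1 1 1; rewrite !FA1 => ->.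
    by ev 0 H 2 2 2; rewrite !FA2 sh0 => ->.
  + by ev o H 0 0 (n - o); fin.
  + by ev o H o o 0; fin.
Qed.

Lemma pp_notin p : p \in Dom n -> pp p \notin Nset n.
Proof.
move: p => [c [b [x y]]] _; apply/imsetP => [[[c' [b' [x' y']]] _]].
rewrite /gg /pp /=.
have [o ho ec] := rebase c c'; subst c'.
case: b; case: b' => H.
-
  have [h|[h|[h|h]]] : o = 0 \/ o = n.-1 \/ o = n - 2 \/ (0 < o /\ o <= n - 3) by lia.
  + by ev o H n.-1 n.-1 n.-1; fin.
  + by ev o H n.-1 n.-1 0; fin.
  + by ev o H n.-1 n.-1 1; fin.
  + by ev o H o.-1 o.-1 n.-1; fin.
-
  have [h|[h|[h|h]]] : o = 0 \/ o = n.-1 \/ o = 1 \/ (2 <= o /\ o <= n - 2) by lia.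
  + by ev o H n.-1 n.-1 n.-1; fin.
  + by ev o H n.-1 n.-1 0; fin.
  + by ev o H 0 0 n.-1; fin.
  + by ev o H 1 1 (n.+1 - o); fin.
-
  have [h|[h|h]] : o = 0 \/ 3 <= o \/ (0 < o /\ o <= 2) by lia.
  + by ev o H 0 0 0; fin.
  + by ev o H o o 0; fin.
  + by ev o H 3 3 (3 - o); fin.
-
  have [h|[h|h]] : o = 0 \/ (0 < o /\ o <= 2) \/ 3 <= o by lia.
  + by ev o H 0 0 0; fin.
  + by ev o H 0 0 (n - o); fin.
  + by ev o H o o 0; fin.
Qed.

End K2.

Section Count.
Variable n : nat.
Hypothesis Hn : 6 < n.
Notation L := (option bool).

Lemma card_Dom : #|Dom n| = n * 10.
Proof.
have -> : Dom n = setX [set: 'I_n] [set q : bool * (L * L) | dpred q].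
  by apply/setP => -[c q]; rewrite !inE.
rewrite cardsX cardsT card_ord; congr (_ * _).
pose s := [:: (true,(Lt,Lt)); (true,(Lt,Gt)); (true,(Lt,Eq)); (true,(Gt,Lt)); (true,(Eq,Lt));
  (false,(Gt,Gt)); (false,(Gt,Lt)); (false,(Gt,Eq)); (false,(Lt,Gt)); (false,(Eq,Gt))].
have -> : #|[set q : bool * (L * L) | dpred q]| = #|s|.
  by apply: eq_card => q; rewrite inE; case: q => [[] [[[]|] [[]|]]].
by apply/card_uniqP.
Qed.

Lemma card_Nset : #|Nset n| = n * 10.
Proof. by rewrite card_in_imset ?card_Dom //; apply: gg_inj. Qed.

Lemma dyn_image : (@PhiF n) @: Vset n = (@PhiF n) @: (Vset n :\: Nset n).
Proof.
apply/eqP; rewrite eqEsubset; apply/andP; split; last first.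
  by apply: imsetS; apply: subsetDl.
apply/subsetP => F /imsetP [v hv ->].
case hN: (v \in Nset n).
  move: hN => /imsetP [p hp ev]; apply/imsetP; exists (pp p).
    by rewrite !inE pp_notin // pp_valid.
  by rewrite ev gp_PhiF.
by apply/imsetP; exists v => //; rewrite in_setD hN hv.
Qed.

Lemma card_dyn_aux : #|dyn_set n| + n * 10 = #|Vset n|.
Proof.
rewrite dyn_setE; last lia.
rewrite dyn_image card_in_imset; last first.
  move=> v w; rewrite !inE => /andP [nv hv] /andP [nw hw] e.
  by apply: (inj_main Hn).
rewrite cardsD (setIidPr (Nset_sub Hn)) card_Nset subnK //.
by rewrite -card_Nset; apply: subset_leq_card; apply: Nset_sub.
Qed.

Lemma card_Vset : #|Vset n| + 2 * 2 ^ n = 3 ^ n + 2.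
Proof.
set A := [set v : labT n | [forall k, v k != Gt]].
set B := [set v : labT n | [forall k, v k != Lt]].
have hV : Vset n = ~: (A :|: B) :|: (A :&: B).
  apply/setP => v; rewrite !inE /valid -!negb_exists.
  by case: [exists k, v k == Lt]; case: [exists k, v k == Gt].
have hA : #|A| = 2 ^ n.
  have -> : #|A| = #|@ffun_on_mem ('I_n : finType) L (mem [pred x : L | x != Gt])|.
    apply: eq_card => v; rewrite inE; apply/forallP/ffun_onP => h k; exact: h.
  rewrite card_ffun_on card_ord; congr (_ ^ _).
  have -> : #|[pred x : L | x != Gt]| = #|[:: Lt; Eq]| by apply: eq_card => -[[]|].
  by apply/card_uniqP.
have hB : #|B| = 2 ^ n.
  have -> : #|B| = #|@ffun_on_mem ('I_n : finType) L (mem [pred x : L | x != Lt])|.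
    apply: eq_card => v; rewrite inE; apply/forallP/ffun_onP => h k; exact: h.
  rewrite card_ffun_on card_ord; congr (_ ^ _).
  have -> : #|[pred x : L | x != Lt]| = #|[:: Gt; Eq]| by apply: eq_card => -[[]|].
  by apply/card_uniqP.
have hAB : A :&: B = [set [ffun=> Eq]].
  apply/setP => v; rewrite !inE; apply/andP/eqP => [[/forallP h1 /forallP h2]|->].
    apply/ffunP => k; rewrite ffunE; move: (h1 k) (h2 k); by case: (v k) => [[]|].
  by split; apply/forallP => k; rewrite ffunE.
have hT : #|~: (A :|: B)| + #|A :|: B| = 3 ^ n.
  rewrite addnC cardsC card_ffun card_ord; congr (_ ^ _).
  have -> : #|{: L}| = #|[:: Lt; Gt; Eq]| by apply: eq_card => -[[]|].
  by apply/card_uniqP.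
have hU := cardsUI A B.
have hD : #|~: (A :|: B) :|: (A :&: B)| = #|~: (A :|: B)| + #|A :&: B|.
  rewrite cardsU; have -> : ~: (A :|: B) :&: (A :&: B) = set0.
    by apply/setP => v; rewrite !(in_set0, in_setI, in_setC, in_setU); case: (v \in A); case: (v \in B).
  by rewrite cards0 subn0.
rewrite hV hD; move: hU hT; rewrite hAB cards1 hA hB; lia.
Qed.

Lemma card_dyn : #|dyn_set n| + 10 * n + 2 ^ n.+1 = 3 ^ n + 2.
Proof. have := card_dyn_aux; have := card_Vset; rewrite expnS; lia. Qed.

End Count.

Import GRing.Theory Num.Theory.

Theorem mainTheorem7 (n : nat) : 6 < n ->
  mu128 n = ((3%:R ^+ n - 2%:R ^+ n.+1 - (10 * n)%:R + 2%:R)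
             / (3%:R ^+ n - 2%:R ^+ n.+1 + 2%:R) : rat)%R.
Proof.
move=> Hn; rewrite /mu128; congr (_ / _)%R.
have := congr1 (fun m : nat => (m%:R : rat)) (card_dyn Hn).
rewrite /= !natrD !natrX => h.
lra.
Qed.
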